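(* For all $n\ge 3$ and $0<k<n-1$, $f(n,k)=f(n,k-1)-f(n-1,k-2)$ (with $f(n-1,-1)=0$).
   Context: A complete non-ambiguous matrix (CNM) of size $n$ is an $n\times n$ matrix $M=(m_{i,j})$ with entries in $\{0,1\}$ whose support $T=\{(i,j): m_{i,j}=1\}$ (whose elements are called vertices) satisfies: (1) $(1,1)\in T$; (2) for every $p=(i,j)\in T$ with $p\neq(1,1)$, exactly one of the following holds: there is $(i',j)\in T$ with $i'<i$, or there is $(i,j')\in T$ with $j'<j$; (3) every row and every column of $M$ contains at least one vertex; (4) define the parent of $p=(i,j)\neq(1,1)$ to be $(i',j)$ with $i'<i$ maximal if such a vertex exists, and otherwise $(i,j')$ with $j'<j$ maximal; then every vertex is the parent of either zero or exactly two vertices. A vertex with no children is a leaf. A CNM of size $n$ is upper-diagonal if its leaves are exactly the positions $(i,n+1-i)$, $1\le i\le n$. For $n\ge 2$ and $0\le k\le n-2$, $f(n,k)$ is the number of upper-diagonal CNMs $M$ of size $n$ with $m_{i,n-i}=0$ for $1\le i\le k$ and $m_{k+1,n-k-1}=1$; $f(n,n-1)$ is the number of upper-diagonal CNMs of size $n$ with $m_{i,n-i}=0$ for all $1\le i\le n-1$; by convention $f(n,-1)=0$. *)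

(* Defs.v *)
From mathcomp Require Import all_boot all_order all_algebra.
Set Implicit Arguments. Unset Strict Implicit. Unset Printing Implicit Defensive.

(* Conventions: a 0/1 matrix of size n is represented by its support
   T : {set 'I_n * 'I_n}; positions are 0-indexed, so the paper's (i,j)
   is our (i-1, j-1). *)

Section CNM.
Variable n : nat.
Implicit Types (T : {set 'I_n * 'I_n}) (p q r : 'I_n * 'I_n).

Definition vert T (i j : nat) : bool :=
  [exists p in T, (p.1 == i :> nat) && (p.2 == j :> nat)].

Definition is_root p : bool := (p.1 == 0 :> nat) && (p.2 == 0 :> nat).

Definition has_above T p : bool :=
  [exists q in T, (q.2 == p.2) && (q.1 < p.1)].
Definition has_left T p : bool :=
  [exists q in T, (q.1 == p.1) && (q.2 < p.2)].

Definition parent T q p : bool :=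
  [&& p \in T, ~~ is_root p, q \in T &
   if has_above T p then
     [&& q.2 == p.2, q.1 < p.1 &
      [forall r in T, ~~ [&& r.2 == p.2, q.1 < r.1 & r.1 < p.1]]]
   else
     [&& q.1 == p.1, q.2 < p.2 &
      [forall r in T, ~~ [&& r.1 == p.1, q.2 < r.2 & r.2 < p.2]]]].

Definition nchildren T q : nat := #|[set p in T | parent T q p]|.

Definition cnm T : bool :=
  [&& vert T 0 0,
      [forall p in T, ~~ is_root p ==> (has_above T p (+) has_left T p)],
      [forall i : 'I_n, [exists p in T, p.1 == i]],
      [forall j : 'I_n, [exists p in T, p.2 == j]] &
      [forall q in T, (nchildren T q == 0) || (nchildren T q == 2)]].

(* leaves are exactly the positions (i, n+1-i) (1-indexed), i.e.
   0-indexed positions (r, c) with r + c = n - 1 *)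
Definition upper_diag T : bool :=
  cnm T &&
  [forall p : 'I_n * 'I_n,
     ((p \in T) && (nchildren T p == 0)) == (p.1 + p.2 == n.-1)].

End CNM.

(* f(n,k): the paper's m_{i,n-i} (1-indexed) is the 0-indexed position
   (i-1, n-i-1) = (r, n-2-r) with r = i-1. *)
Definition f (n : nat) (k : int) : nat :=
  match k with
  | Negz _ => 0
  | Posz k =>
    if k < n.-1 then
      #|[set T : {set 'I_n * 'I_n} |
          [&& upper_diag T,
              [forall r : 'I_n, (r < k) ==> ~~ vert T r (n - 2 - r)] &
              vert T k (n - 2 - k)]]|
    else if k == n.-1 then
      #|[set T : {set 'I_n * 'I_n} |
          upper_diag T &&
          [forall r : 'I_n, (r < n.-1) ==> ~~ vert T r (n - 2 - r)]]|
    else 0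
  end.

(* Main.v *)
Require Import Defs.
From Stdlib Require Import FunctionalExtensionality.
From mathcomp Require Import all_boot all_order all_algebra.
From mathcomp Require Import zify.
From Stdlib Require Import Classical.
Set Implicit Arguments. Unset Strict Implicit. Unset Printing Implicit Defensive.

Definition rho (h a : nat) : nat := a + (h < a).
Definition unrho (h i : nat) : nat := i - (h.+1 < i).

Definition Ab (v : nat -> nat -> bool) i j := exists i', i' < i /\ v i' j.
Definition Lf (v : nat -> nat -> bool) i j := exists j', j' < j /\ v i j'.
Definition Bl (v : nat -> nat -> bool) i j := exists i', i < i' /\ v i' j.
Definition Rt (v : nat -> nat -> bool) i j := exists j', j < j' /\ v i j'.

Record UDP (N : nat) (v : nat -> nat -> bool) : Prop := {
  ud_bnd : forall i j, v i j -> i < N /\ j < N;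
  ud_00 : v 0 0;
  ud_xor : forall i j, v i j -> 0 < i + j -> (Ab v i j <-> ~ Lf v i j);
  ud_rb : forall i j, v i j -> (Rt v i j <-> Bl v i j);
  ud_leaf : forall i j, v i j -> (~ Rt v i j <-> i + j = N.-1);
  ud_diag : forall i, i < N -> v i (N.-1 - i) }.

Definition psiP k c1 (w : nat -> nat -> bool) i j :=
  ((i == k) && (j == c1.+1)) || ((i == k.+1) && (j == c1)) ||
  [&& i != k.+1, j != c1.+1 & w (unrho k i) (unrho c1 j)].

Lemma ud_sum N v i j : UDP N v -> v i j -> i + j <= N.-1.
Proof.
move=> U.
suff H : forall d j, N - j <= d -> forall i, v i j -> i + j <= N.-1 by apply: H.
elim=> [|d IH] j' Hd i' vij.
  by have := ud_bnd U vij; lia.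
case: (leqP (i' + j') N.-1) => // Hlt.
have : Rt v i' j'.
  case: (boolP (i' + j' == N.-1)); first by lia.
  move=> ne; apply: NNPP => nR.
  by move/(ud_leaf U vij): nR; lia.
case=> j2 [lt2 v2].
have := IH j2 _ i' v2.
have := ud_bnd U v2; lia.
Qed.
Ltac rl := unfold rho, unrho in *; lia.

Section Core.
Variables (k c1 : nat) (w v : nat -> nat -> bool).
Hypothesis Hv : forall i j, v i j = psiP k c1 w i j.
Hypothesis HZ : w k c1.
Hypothesis S1 : forall b, w k b -> b <= c1.
Hypothesis S2 : forall a, w a c1 -> a <= k.

Lemma D0 a b : v (rho k a) (rho c1 b) = w a b.
Proof.
rewrite Hv /psiP.
have E1 : (rho k a == k.+1) = false by apply/eqP; rl.
have E2 : (rho c1 b == c1.+1) = false by apply/eqP; rl.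
have E3 : unrho k (rho k a) = a by rl.
have E4 : unrho c1 (rho c1 b) = b by rl.
by rewrite E1 E2 E3 E4 andbF andFb.
Qed.

Lemma Dcases i j : v i j -> [\/ i = k /\ j = c1.+1, i = k.+1 /\ j = c1 |
  exists a b, [/\ i = rho k a, j = rho c1 b & w a b]].
Proof.
rewrite Hv /psiP => /orP[/orP[/andP[/eqP-> /eqP->]|/andP[/eqP-> /eqP->]]|/and3P[ni nj wij]].
- by constructor 1.
- by constructor 2.
constructor 3; exists (unrho k i), (unrho c1 j); split => //; rl.
Qed.

Lemma vX : v k c1.+1.
Proof. by rewrite Hv /psiP !eqxx. Qed.
Lemma vY : v k.+1 c1.
Proof. by rewrite Hv /psiP !eqxx orbT. Qed.
Lemma vZ : v k c1.
Proof. by have := D0 k c1; rewrite /rho !ltnn !addn0 => ->. Qed.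

Lemma nAbX : ~ Ab v k c1.+1.
Proof. case=> i' [lt vi]; case: (Dcases vi) => [[? ?]|[? ?]|[a [b [ei ej wab]]]]; rl. Qed.

Lemma nRtX : ~ Rt v k c1.+1.
Proof.
case=> j' [lt vi]; case: (Dcases vi) => [[? ?]|[? ?]|[a [b [ei ej wab]]]]; try rl.
have ea : a = k by rl.
subst a; have := S1 wab; rl.
Qed.

Lemma nBlX : ~ Bl v k c1.+1.
Proof. case=> i' [lt vi]; case: (Dcases vi) => [[? ?]|[? ?]|[a [b [ei ej wab]]]]; rl. Qed.

Lemma LfX : Lf v k c1.+1.
Proof. by exists c1; split => //; exact: vZ. Qed.

Lemma AbY : Ab v k.+1 c1.
Proof. by exists k; split => //; exact: vZ. Qed.

Lemma nLfY : ~ Lf v k.+1 c1.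
Proof. case=> j' [lt vi]; case: (Dcases vi) => [[? ?]|[? ?]|[a [b [ei ej wab]]]]; rl. Qed.

Lemma nRtY : ~ Rt v k.+1 c1.
Proof. case=> j' [lt vi]; case: (Dcases vi) => [[? ?]|[? ?]|[a [b [ei ej wab]]]]; rl. Qed.

Lemma nBlY : ~ Bl v k.+1 c1.
Proof.
case=> i' [lt vi]; case: (Dcases vi) => [[? ?]|[? ?]|[a [b [ei ej wab]]]]; try rl.
have eb : b = c1 by rl.
subst b; have := S2 wab; rl.
Qed.

Lemma oAb a b : w a b -> (Ab v (rho k a) (rho c1 b) <-> Ab w a b).
Proof.
move=> wab; split.
- case=> i' [lt vi]; case: (Dcases vi) => [[? ?]|[? ?]|[a' [b' [ei ej wab']]]]; try rl.
  + have eb : b = c1 by rl.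
    subst b; have := S2 wab; rl.
  + have eb : b' = b by rl.
    subst b'; exists a'; split => //; rl.
- case=> a' [lt wa]; exists (rho k a'); split; first by rl.
  by rewrite D0.
Qed.

Lemma oLf a b : w a b -> (Lf v (rho k a) (rho c1 b) <-> Lf w a b).
Proof.
move=> wab; split.
- case=> j' [lt vi]; case: (Dcases vi) => [[? ?]|[? ?]|[a' [b' [ei ej wab']]]]; try rl.
  + have ea : a = k by rl.
    subst a; have := S1 wab; rl.
  + have ea : a' = a by rl.
    subst a'; exists b'; split => //; rl.
- case=> b' [lt wa]; exists (rho c1 b'); split; first by rl.
  by rewrite D0.
Qed.

Lemma oRt a b : w a b -> (Rt v (rho k a) (rho c1 b) <-> Rt w a b \/ (a = k /\ b = c1)).
Proof.
move=> wab; split.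
- case=> j' [lt vi]; case: (Dcases vi) => [[? ?]|[? ?]|[a' [b' [ei ej wab']]]]; try rl.
  + have ea : a = k by rl.
    subst a; case: (ltngtP b c1) => hb.
    * by left; exists c1.
    * have := S1 wab; rl.
    * by right.
  + have ea : a' = a by rl.
    subst a'; left; exists b'; split => //; rl.
- case=> [[b' [lt wa]]|[-> ->]].
  + exists (rho c1 b'); split; first by rl.
    by rewrite D0.
  + exists c1.+1; split; first by rl.
    rewrite (_ : rho k k = k); [exact: vX | rl].
Qed.

Lemma oBl a b : w a b -> (Bl v (rho k a) (rho c1 b) <-> Bl w a b \/ (a = k /\ b = c1)).
Proof.
move=> wab; split.
- case=> i' [lt vi]; case: (Dcases vi) => [[? ?]|[? ?]|[a' [b' [ei ej wab']]]]; try rl.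
  + have eb : b = c1 by rl.
    subst b; case: (ltngtP a k) => ha.
    * by left; exists k.
    * have := S2 wab; rl.
    * by right.
  + have eb : b' = b by rl.
    subst b'; left; exists a'; split => //; rl.
- case=> [[a' [lt wa]]|[-> ->]].
  + exists (rho k a'); split; first by rl.
    by rewrite D0.
  + exists k.+1; split; first by rl.
    rewrite (_ : rho c1 c1 = c1); [exact: vY | rl].
Qed.

Variable m : nat.
Hypothesis Hm : m = k + c1.+1.

Lemma nRtZ : ~ Rt w k c1.
Proof. by case=> b' [lt wb]; have := S1 wb; lia. Qed.
Lemma nBlZ : ~ Bl w k c1.
Proof. by case=> a' [lt wa]; have := S2 wa; lia. Qed.

Lemma UD_up : UDP m w -> UDP m.+1 v.
Proof.
move=> U; split.
- move=> i j /Dcases[[-> ->]|[-> ->]|[a [b [-> -> wab]]]]; try lia.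
  by have := ud_bnd U wab; rl.
- by have := D0 0 0; rewrite /rho !addn0 => ->; exact: ud_00 U.
- move=> i j /Dcases[[-> ->]|[-> ->]|[a [b [-> -> wab]]]] pos.
  + by have := nAbX; have := LfX; tauto.
  + by have := AbY; have := nLfY; tauto.
  + have pos' : 0 < a + b by rl.
    have := oAb wab; have := oLf wab; have := ud_xor U wab pos'; tauto.
- move=> i j /Dcases[[-> ->]|[-> ->]|[a [b [-> -> wab]]]].
  + by have := nRtX; have := nBlX; tauto.
  + by have := nRtY; have := nBlY; tauto.
  + have := oRt wab; have := oBl wab; have := ud_rb U wab; tauto.
- move=> i j /Dcases[[-> ->]|[-> ->]|[a [b [-> -> wab]]]] /=.
  + by have := nRtX; split => // _; lia.
  + by have := nRtY; split => // _; lia.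
  + have := oRt wab; have := ud_leaf U wab; have := ud_sum U wab.
    case: (boolP ((a == k) && (b == c1))).
      move=> /andP[/eqP ea /eqP eb]; subst a b => _ _ h.
      split; first by case; apply/h; right.
      rl.
    move=> /andP nZ sb hl hr.
    have hs : rho k a + rho c1 b = m <-> a + b = m.-1.
      split; rl.
    have nZ' : ~ (a = k /\ b = c1) by move=> [ea eb]; apply: nZ; subst; rewrite !eqxx.
    tauto.
- move=> i /= lti.
  case: (ltngtP i k) => hik.
  + have e1 : rho k i = i by rl.
    have e2 : rho c1 (m.-1 - i) = m - i by rl.
    by have := D0 i (m.-1 - i); rewrite e1 e2 => ->; apply: (ud_diag U); lia.
  + case: (ltngtP i k.+1) => hik2; first by lia.
    * have e1 : rho k i.-1 = i by rl.
      have e2 : rho c1 (m.-1 - i.-1) = m - i by rl.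
      by have := D0 i.-1 (m.-1 - i.-1); rewrite e1 e2 => ->; apply: (ud_diag U); lia.
    * by subst i; rewrite (_ : m - k.+1 = c1); [exact: vY | lia].
  + by subst i; rewrite (_ : m - k = c1.+1); [exact: vX | lia].
Qed.

Lemma UD_down : (forall a b, w a b -> a < m /\ b < m) -> UDP m.+1 v -> UDP m w.
Proof.
move=> Hwb U.
have vab a b : w a b -> v (rho k a) (rho c1 b) by rewrite D0.
split.
- exact: Hwb.
- by have := D0 0 0; rewrite /rho !addn0 => <-; exact: ud_00 U.
- move=> a b wab pos.
  have pos' : 0 < rho k a + rho c1 b by rl.
  have := oAb wab; have := oLf wab; have := ud_xor U (vab _ _ wab) pos'; tauto.
- move=> a b wab.
  case: (boolP ((a == k) && (b == c1))).
    by move=> /andP[/eqP ea /eqP eb]; subst a b; have := nRtZ; have := nBlZ; tauto.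
  move=> /andP nZ.
  have nZ' : ~ (a = k /\ b = c1) by move=> [ea eb]; apply: nZ; subst; rewrite !eqxx.
  have := oRt wab; have := oBl wab; have := ud_rb U (vab _ _ wab); tauto.
- move=> a b wab.
  case: (boolP ((a == k) && (b == c1))).
    move=> /andP[/eqP ea /eqP eb]; subst a b.
    by have := nRtZ; split => // _; lia.
  move=> /andP nZ.
  have nZ' : ~ (a = k /\ b = c1) by move=> [ea eb]; apply: nZ; subst; rewrite !eqxx.
  have := oRt wab; have := ud_leaf U (vab _ _ wab); have := ud_sum U (vab _ _ wab).
  move=> /= sb hl hr.
  have hs : rho k a + rho c1 b = m <-> a + b = m.-1.
    split; rl.
  tauto.
- move=> a lta.
  case: (eqVneq a k) => [->|nak]; first by rewrite (_ : m.-1 - k = c1) //; lia.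
  have e : rho c1 (m.-1 - a) = m - rho k a by rl.
  rewrite -D0 e.
  have h : rho k a < m.+1 by rl.
  by have := ud_diag U h.
Qed.
End Core.
Ltac gl := unfold rho, unrho; lia.

Lemma up_dir m k w : k < m -> UDP m w ->
  (forall r, r.+1 < k -> ~~ w r (m.-2 - r)) ->
  [/\ UDP m.+1 (psiP k (m.-1 - k) w), psiP k (m.-1 - k) w k (m.-1 - k) &
     (forall r, r < k -> ~~ psiP k (m.-1 - k) w r (m.-1 - r))].
Proof.
move=> km U Hnd.
set c1 := m.-1 - k; set v := psiP k c1 w.
have Hv : forall i j, v i j = psiP k c1 w i j by [].
have Hm : m = k + c1.+1 by rewrite /c1; lia.
have HZ : w k c1 by apply: (ud_diag U).
have S1 : forall b, w k b -> b <= c1.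
  move=> b wb; case: (leqP b c1) => // hb.
  have : Rt w k c1 by exists b.
  have e : k + c1 = m.-1 by rewrite /c1; lia.
  by have := ud_leaf U HZ; tauto.
have S2 : forall a, w a c1 -> a <= k.
  move=> a wa; case: (leqP a k) => // ha.
  have : Bl w k c1 by exists a.
  have := ud_leaf U HZ; have := ud_rb U HZ.
  have e : k + c1 = m.-1 by rewrite /c1; lia.
  tauto.
split.
- exact: (UD_up Hv HZ S1 S2 Hm U).
- exact: (vZ Hv HZ).
move=> r rk; apply/negP => /(Dcases Hv HZ)[[? ?]|[? ?]|[a [b [ei ej wab]]]]; try lia.
have ea : a = r by rl.
subst a.
case: (leqP b c1) => hb; first by rl.
have eb : b = m.-2 - r by rl.
subst b; have : r.+1 < k by rl.
by move/Hnd; rewrite wab.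
Qed.

Lemma down_dir m k v : k < m -> UDP m.+1 v -> v k (m.-1 - k) ->
  (forall r, r < k -> ~~ v r (m.-1 - r)) ->
  let w := fun a b => [&& a < m, b < m & v (rho k a) (rho (m.-1 - k) b)] in
  [/\ (forall i j, v i j = psiP k (m.-1 - k) w i j), UDP m w &
     (forall r, r.+1 < k -> ~~ w r (m.-2 - r))].
Proof.
move=> km U vZ Hnd w.
set c1 := m.-1 - k.
have Hm : m = k + c1.+1 by rewrite /c1; lia.
have vX : v k c1.+1 by have := ud_diag U (_ : k < m.+1); rewrite (_ : m.+1.-1 - k = c1.+1); [apply; lia | lia].
have vY : v k.+1 c1 by have := ud_diag U (_ : k.+1 < m.+1); rewrite (_ : m.+1.-1 - k.+1 = c1); [apply; lia | lia].
have RtZ : Rt v k c1.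
  apply: NNPP => nR; have := (ud_leaf U vZ).1 nR; lia.
have BlZ : Bl v k c1 by apply/(ud_rb U vZ).
have nRtX : ~ Rt v k c1.+1 by apply/(ud_leaf U vX); lia.
have nBlX : ~ Bl v k c1.+1 by move/(ud_rb U vX).
have nAbX : ~ Ab v k c1.+1.
  have LfX : Lf v k c1.+1 by exists c1.
  have pos : 0 < k + c1.+1 by lia.
  by have := ud_xor U vX pos; tauto.
have nRtY : ~ Rt v k.+1 c1 by apply/(ud_leaf U vY); lia.
have nBlY : ~ Bl v k.+1 c1 by move/(ud_rb U vY).
have nLfY : ~ Lf v k.+1 c1.
  have AbY : Ab v k.+1 c1 by exists k.
  have pos : 0 < k.+1 + c1 by lia.
  by have := ud_xor U vY pos; tauto.
have colc : forall i, v i c1.+1 -> i = k.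
  move=> i vi; case: (ltngtP i k) => // hi.
  - by case: nAbX; exists i.
  - by case: nBlX; exists i.
have rowk1 : forall j, v k.+1 j -> j = c1.
  move=> j vj; case: (ltngtP j c1) => // hj.
  - by case: nLfY; exists j.
  - by case: nRtY; exists j.
have Hv : forall i j, v i j = psiP k c1 w i j.
  move=> i j; rewrite /psiP /w; apply/idP/idP.
  - move=> vij; have := ud_bnd U vij => -[bi bj].
    case: (eqVneq i k.+1) => [ei|ni].
      by subst i; rewrite (rowk1 _ vij) !eqxx orbT.
    case: (eqVneq j c1.+1) => [ej|nj].
      by subst j; rewrite (colc _ vij) !eqxx.
    apply/orP; right; apply/and3P; split => //.
    have e1 : rho k (unrho k i) = i by unfold rho, unrho; lia.
    have e2 : rho c1 (unrho c1 j) = j by unfold rho, unrho; lia.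
    rewrite e1 e2 vij andbT; apply/andP; split; unfold rho, unrho; lia.
  - case/orP=> [/orP[/andP[/eqP-> /eqP->]|/andP[/eqP-> /eqP->]]|/and3P[ni nj /and3P[_ _]]] //.
    have e1 : rho k (unrho k i) = i by unfold rho, unrho; lia.
    have e2 : rho c1 (unrho c1 j) = j by unfold rho, unrho; lia.
    by rewrite e1 e2.
have HZ : w k c1.
  have e1 : rho k k = k by gl.
  have e2 : rho c1 c1 = c1 by gl.
  have c1m : c1 < m by rewrite /c1; lia.
  by rewrite /w e1 e2 vZ km c1m.
have S1 : forall b, w k b -> b <= c1.
  move=> b /and3P[_ _]; rewrite (_ : rho k k = k); last gl.
  case: (leqP b c1) => // hb vb.
  by case: nRtX; exists (rho c1 b); split => //; gl.
have S2 : forall a, w a c1 -> a <= k.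
  move=> a /and3P[_ _]; rewrite (_ : rho c1 c1 = c1); last gl.
  case: (leqP a k) => // ha va.
  by case: nBlY; exists (rho k a); split => //; gl.
have Hwb : forall a b, w a b -> a < m /\ b < m.
  by move=> a b /and3P[? ? _].
split => //.
- exact: (UD_down Hv HZ S1 S2 Hm Hwb U).
move=> r rk; apply/negP => /and3P[_ _].
have e1 : rho k r = r by gl.
have e2 : rho c1 (m.-2 - r) = m.-1 - r by gl.
by rewrite e1 e2; apply/negP; apply: Hnd; lia.
Qed.

Section Bridge.
Variable n : nat.
Implicit Types T : {set 'I_n * 'I_n}.

Lemma pair_eq (p1 p2 : 'I_n * 'I_n) :
  (p1.1 : nat) = p2.1 -> (p1.2 : nat) = p2.2 -> p1 = p2.
Proof. by case: p1 p2 => [a b] [c d] /= e1 e2; congr pair; apply: val_inj. Qed.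

Lemma vertP T i j :
  reflect (exists2 p, p \in T & (p.1 : nat) = i /\ (p.2 : nat) = j) (vert T i j).
Proof.
apply: (iffP existsP) => [[p /andP[pT /andP[/eqP e1 /eqP e2]]]|[p pT [e1 e2]]].
  by exists p.
by exists p; rewrite pT e1 e2 !eqxx.
Qed.

Lemma vertE T (a b : 'I_n) : vert T a b = ((a, b) \in T).
Proof.
apply/vertP/idP => [[p pT [e1 e2]]|H]; last by exists ((a, b) : 'I_n * 'I_n).
by rewrite (_ : (a, b) = p) //; apply: pair_eq.
Qed.

Lemma vert_bnd T i j : vert T i j -> i < n /\ j < n.
Proof. by case/vertP=> p _ [<- <-]. Qed.

Lemma aboveP T (p : 'I_n * 'I_n) : reflect (Ab (vert T) p.1 p.2) (has_above T p).
Proof.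
apply: (iffP existsP) => [[q /and3P[qT /eqP e2 lt]]|[i' [lt /vertP[q qT [e1 e2]]]]].
  by exists q.1; split => //; apply/vertP; exists q => //; rewrite e2.
exists q; rewrite qT /= e1 lt andbT; apply/eqP; exact: val_inj.
Qed.

Lemma leftP T (p : 'I_n * 'I_n) : reflect (Lf (vert T) p.1 p.2) (has_left T p).
Proof.
apply: (iffP existsP) => [[q /and3P[qT /eqP e1 lt]]|[j' [lt /vertP[q qT [e1 e2]]]]].
  by exists q.2; split => //; apply/vertP; exists q => //; rewrite e1.
exists q; rewrite qT /= e2 lt andbT; apply/eqP; exact: val_inj.
Qed.

Section Children.
Variables (T : {set 'I_n * 'I_n}) (q : 'I_n * 'I_n).
Hypothesis qT : q \in T.
Hypothesis Hx : forall p, p \in T -> ~~ is_root p -> has_above T p (+) has_left T p.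

Lemma child_col p : parent T q p -> has_above T p -> Bl (vert T) q.1 q.2.
Proof.
rewrite /parent => /and4P[pT _ _]; move=> H ha; move: H; rewrite ha => /and3P[/eqP e2 lt _].
by exists p.1; split => //; apply/vertP; exists p => //; rewrite e2.
Qed.

Lemma child_row p : parent T q p -> ~~ has_above T p -> Rt (vert T) q.1 q.2.
Proof.
rewrite /parent => /and4P[pT _ _]; move=> H ha; move: H; rewrite (negbTE ha) => /and3P[/eqP e1 lt _].
by exists p.2; split => //; apply/vertP; exists p => //; rewrite e1.
Qed.

Lemma child_uniq p1 p2 : parent T q p1 -> parent T q p2 ->
  has_above T p1 = has_above T p2 -> p1 = p2.
Proof.
rewrite /parent => /and4P[p1T _ _ H1] /and4P[p2T _ _ H2] E.
case: (boolP (has_above T p1)) => ha.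
- move: H1 H2; rewrite -E ha => /and3P[/eqP e1 l1 /forallP F1] /and3P[/eqP e2 l2 /forallP F2].
  apply: pair_eq; last by rewrite -e1 -e2.
  case: (ltngtP p1.1 p2.1) => // h.
  + by have := F2 p1; rewrite p1T -e1 e2 eqxx l1 h.
  + by have := F1 p2; rewrite p2T -e2 e1 eqxx l2 h.
- move: H1 H2; rewrite -E (negbTE ha) => /and3P[/eqP e1 l1 /forallP F1] /and3P[/eqP e2 l2 /forallP F2].
  apply: pair_eq; first by rewrite -e1 -e2.
  case: (ltngtP p1.2 p2.2) => // h.
  + by have := F2 p1; rewrite p1T -e1 e2 eqxx l1 h.
  + by have := F1 p2; rewrite p2T -e2 e1 eqxx l2 h.
Qed.

Lemma child_exB : Bl (vert T) q.1 q.2 -> exists2 p, parent T q p & has_above T p.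
Proof.
move=> ex.
have exP : exists i, (q.1 < i) && vert T i q.2.
  by case: ex => i [l v]; exists i; rewrite l v.
case: (ex_minnP exP) => i0 /andP[l0 /vertP[p pT [e1 e2]]] mn.
have ha : has_above T p.
  apply/aboveP; exists q.1; split; first by rewrite e1.
  by apply/vertP; exists q => //; rewrite e2.
exists p => //.
rewrite /parent pT qT ha /=; apply/andP; split.
  by rewrite /is_root e1; case: eqP => //= e; move: l0; rewrite e.
apply/and3P; split.
- by apply/eqP; apply: val_inj; rewrite /= e2.
- by rewrite e1.
apply/forallP => r; apply/implyP => rT; apply/negP => /and3P[/eqP er l1 l2].
have : (q.1 < r.1) && vert T r.1 q.2.
  by rewrite l1 /=; apply/vertP; exists r => //; rewrite er e2.
by move/mn; rewrite -e1 leqNgt l2.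
Qed.

Lemma child_exR : Rt (vert T) q.1 q.2 -> exists2 p, parent T q p & ~~ has_above T p.
Proof.
move=> ex.
have exP : exists j, (q.2 < j) && vert T q.1 j.
  by case: ex => j [l v]; exists j; rewrite l v.
case: (ex_minnP exP) => j0 /andP[l0 /vertP[p pT [e1 e2]]] mn.
have hl : has_left T p.
  apply/leftP; exists q.2; split; first by rewrite e2.
  by apply/vertP; exists q => //; rewrite e1.
have nr : ~~ is_root p.
  by rewrite /is_root e2 andbC; case: eqP => //= e; move: l0; rewrite e.
have ha : ~~ has_above T p by move: (Hx pT nr); rewrite hl addbT.
exists p => //.
rewrite /parent pT qT nr (negbTE ha) /=.
apply/and3P; split.
- by apply/eqP; apply: val_inj; rewrite /= e1.
- by rewrite e2.
apply/forallP => r; apply/implyP => rT; apply/negP => /and3P[/eqP er l1 l2].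
have : (q.2 < r.2) && vert T q.1 r.2.
  by rewrite l1 /=; apply/vertP; exists r => //; rewrite er e1.
by move/mn; rewrite -e2 leqNgt l2.
Qed.

Lemma inS p : (p \in [set p in T | parent T q p]) = parent T q p.
Proof.
rewrite inE; apply/andP/idP => [[]//|h]; split => //.
by case/and4P: h.
Qed.

Lemma nch0 : nchildren T q = 0 <-> ~ Rt (vert T) q.1 q.2 /\ ~ Bl (vert T) q.1 q.2.
Proof.
rewrite /nchildren; split.
- move/eqP; rewrite cards_eq0 => /eqP S0; split.
  + case/child_exR => p pq _.
    have : p \in [set p in T | parent T q p] by rewrite inS.
    by rewrite S0 in_set0.
  + case/child_exB => p pq _.
    have : p \in [set p in T | parent T q p] by rewrite inS.
    by rewrite S0 in_set0.
- case=> nR nB; apply/eqP; rewrite cards_eq0; apply/eqP/setP => p.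
  rewrite in_set0 inS; apply/negP => pp.
  case: (boolP (has_above T p)) => h.
  + by apply: nB; exact: child_col pp h.
  + by apply: nR; exact: child_row pp h.
Qed.

Lemma nch2 : nchildren T q = 2 <-> Rt (vert T) q.1 q.2 /\ Bl (vert T) q.1 q.2.
Proof.
rewrite /nchildren; split.
- move=> c2.
  have : 1 < #|[set p in T | parent T q p]| by rewrite c2.
  case/card_gt1P => x [y [xS yS nxy]].
  rewrite inS in xS; rewrite inS in yS.
  case: (boolP (has_above T x)) => hx; case: (boolP (has_above T y)) => hy.
  + by case/eqP: nxy; apply: child_uniq => //; rewrite hx hy.
  + by split; [exact: child_row yS hy | exact: child_col xS hx].
  + by split; [exact: child_row xS hx | exact: child_col yS hy].
  + by case/eqP: nxy; apply: child_uniq => //; rewrite (negbTE hx) (negbTE hy).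
- case=> /child_exR[cr pr hr] /child_exB[cb pb hb].
  have -> : [set p in T | parent T q p] = [set cb; cr].
    apply/setP => p; rewrite inS !inE; apply/idP/orP.
    + move=> pp; case: (boolP (has_above T p)) => h.
      * by left; apply/eqP; apply: child_uniq => //; rewrite h hb.
      * by right; apply/eqP; apply: child_uniq => //; rewrite (negbTE h) (negbTE hr).
    + by case=> /eqP ->.
  rewrite cards2; case: eqP => // e.
  by move: hr; rewrite -e hb.
Qed.

End Children.
End Bridge.

Lemma udP n (T : {set 'I_n * 'I_n}) : upper_diag T <-> UDP n (vert T).
Proof.
split.
- move/andP => [/and5P[v00 /forallP X _ _ /forallP C] /forallP L].
  have Hx : forall p, p \in T -> ~~ is_root p -> has_above T p (+) has_left T p.
    by move=> p pT nr; move: (X p); rewrite pT nr.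
  have rb : forall i j, vert T i j -> (Rt (vert T) i j <-> Bl (vert T) i j).
    move=> i j /vertP[p pT [<- <-]].
    move: (C p); rewrite pT /= => /orP[/eqP h|/eqP h].
    + by have := (nch0 pT Hx).1 h; tauto.
    + by have := (nch2 pT Hx).1 h; tauto.
  split => //.
  + exact: vert_bnd.
  + move=> i j /vertP[p pT [<- <-]] pos.
    have nr : ~~ is_root p by rewrite /is_root; apply/negP => /andP[/eqP e1 /eqP e2]; move: pos; rewrite e1 e2.
    move: (Hx p pT nr); case: (aboveP T p) => ha; case: (leftP T p) => hl //= _; tauto.
  + move=> i j vij; have := rb i j vij; move: vij => /vertP[p pT [<- <-]] hrb.
    move: (L p); rewrite pT /= => /eqP E.
    have h0 := nch0 pT Hx.
    split.
    * move=> nR; apply/eqP; rewrite -E; apply/eqP; apply/h0; tauto.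
    * move=> s; have : nchildren T p == 0 by rewrite E s.
      by move/eqP/h0; tauto.
  + move=> i lti.
    have ltj : n.-1 - i < n by lia.
    move: (L (Ordinal lti, Ordinal ltj)) => /=.
    rewrite (_ : i + (n.-1 - i) = n.-1); last by lia.
    by rewrite eqxx => /eqP/andP[pT _]; move: pT; rewrite -vertE.
- move=> U.
  have Hx : forall p, p \in T -> ~~ is_root p -> has_above T p (+) has_left T p.
    move=> p pT nr.
    have pos : 0 < p.1 + p.2.
      by move: nr; rewrite /is_root; case: (p.1 : nat) => [|?]; case: (p.2 : nat).
    have vp : vert T p.1 p.2 by rewrite vertE; case: p pT {nr pos}.
    have := ud_xor U vp pos.
    case: (aboveP T p) => ha; case: (leftP T p) => hl //=; tauto.
  apply/andP; split; first (apply/and5P; split).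
  + exact: ud_00 U.
  + by apply/forallP => p; apply/implyP => pT; apply/implyP => nr; apply: Hx.
  + apply/forallP => i; have := ud_diag U (ltn_ord i).
    case/vertP => p pT [e1 _]; apply/existsP; exists p; rewrite pT /=.
    by apply/eqP; apply: val_inj.
  + apply/forallP => j.
    have lt : n.-1 - j < n by have := ltn_ord j; lia.
    have := ud_diag U lt; rewrite (_ : n.-1 - (n.-1 - j) = j); last by have := ltn_ord j; lia.
    case/vertP => p pT [_ e2]; apply/existsP; exists p; rewrite pT /=.
    by apply/eqP; apply: val_inj.
  + apply/forallP => q; apply/implyP => qT.
    have vq : vert T q.1 q.2 by rewrite vertE; case: q qT.
    have := ud_rb U vq.
    case: (classic (Rt (vert T) q.1 q.2)) => hR hrb.
    * by apply/orP; right; apply/eqP; apply/(nch2 qT Hx); tauto.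
    * by apply/orP; left; apply/eqP; apply/(nch0 qT Hx); tauto.
  + apply/forallP => -[a b] /=.
    case: (boolP ((a, b) \in T)) => pT.
    * have vp : vert T a b by rewrite vertE.
      have := ud_rb U vp; have := ud_leaf U vp; have := nch0 pT Hx.
      move=> h0 hl hrb.
      rewrite andTb.
      apply/eqP; apply/idP/idP => [/eqP h|/eqP h]; apply/eqP.
      -- by have := h0.1 h; tauto.
      -- by apply/h0; tauto.
    * rewrite andFb eq_sym eqbF_neg; apply/negP => /eqP s.
      have := ud_diag U (ltn_ord a).
      rewrite (_ : n.-1 - a = b); last by lia.
      by rewrite vertE (negbTE pT).
Qed.

Lemma vert_set n (P : nat -> nat -> bool) i j :
  vert [set p : 'I_n * 'I_n | P p.1 p.2] i j = [&& i < n, j < n & P i j].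
Proof.
apply/vertP/and3P => [[p]|[hi hj hP]].
  by rewrite inE => Pp [<- <-]; split.
by exists (Ordinal hi, Ordinal hj); rewrite ?inE.
Qed.

Lemma set_ext n (T1 T2 : {set 'I_n * 'I_n}) :
  (forall i j, vert T1 i j = vert T2 i j) -> T1 = T2.
Proof. by move=> H; apply/setP => -[a b]; rewrite -!vertE. Qed.

Lemma UDP_ext N v1 v2 : (forall i j, v1 i j = v2 i j) -> UDP N v1 -> UDP N v2.
Proof.
move=> H; have -> // : v1 = v2.
by apply: functional_extensionality => i; apply: functional_extensionality => j.
Qed.

Lemma psiP_rho k c1 w a b : psiP k c1 w (rho k a) (rho c1 b) = w a b.
Proof.
rewrite /psiP.
have E1 : (rho k a == k.+1) = false by apply/eqP; gl.
have E2 : (rho c1 b == c1.+1) = false by apply/eqP; gl.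
have E3 : unrho k (rho k a) = a by gl.
have E4 : unrho c1 (rho c1 b) = b by gl.
by rewrite E1 E2 E3 E4 andbF andFb.
Qed.

Definition G m k := #|[set T : {set 'I_m * 'I_m} |
  upper_diag T && [forall r : 'I_m, (r.+1 < k) ==> ~~ vert T r (m - 2 - r)]]|.

Section Bij.
Variables m k : nat.
Hypothesis km : k < m.
Let c1 := m.-1 - k.
Definition Psi (T' : {set 'I_m * 'I_m}) : {set 'I_m.+1 * 'I_m.+1} :=
  [set p : 'I_m.+1 * 'I_m.+1 | psiP k c1 (vert T') p.1 p.2].

Lemma Psi_inj : injective Psi.
Proof.
move=> T1 T2 E; apply: set_ext => a b.
case: (boolP ((a < m) && (b < m))) => [/andP[am bm]|nb].
- have e : forall T', vert T' a b = vert (Psi T') (rho k a) (rho c1 b).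
    move=> T'; rewrite vert_set psiP_rho.
    have -> : rho k a < m.+1 by gl.
    by have -> : rho c1 b < m.+1 by rewrite /c1; gl.
  by rewrite !e E.
- case: (boolP (vert T1 a b)) => [/vert_bnd|_]; first by move: nb; case: (a < m); case: (b < m) => //= _ [].
  by case: (boolP (vert T2 a b)) => [/vert_bnd|//]; move: nb; case: (a < m); case: (b < m) => //= _ [].
Qed.

Lemma card_bij :
  #|[set T : {set 'I_m.+1 * 'I_m.+1} |
      [&& upper_diag T, [forall r : 'I_m.+1, (r < k) ==> ~~ vert T r (m.+1 - 2 - r)]
        & vert T k (m.+1 - 2 - k)]]| = G m k.
Proof.
rewrite /G -(card_in_imset (f := Psi)); last by move=> ? ? _ _; apply: Psi_inj.
apply: eq_card => T; rewrite inE; apply/idP/imsetP.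
- case/and3P => /udP U /forallP Hn vk.
  have vZ : vert T k (m.-1 - k) by rewrite (_ : m.-1 - k = m.+1 - 2 - k) //; lia.
  have Hn' : forall r, r < k -> ~~ vert T r (m.-1 - r).
    move=> r rk; have rm : r < m.+1 by lia.
    by have := Hn (Ordinal rm); rewrite /= rk (_ : m.+1 - 2 - r = m.-1 - r) //; lia.
  have [Hv Uw Hnd] := down_dir km U vZ Hn'.
  set w := fun a b => _ in Hv Uw Hnd.
  exists [set p : 'I_m * 'I_m | w p.1 p.2].
  + have ew : forall a b, vert [set p : 'I_m * 'I_m | w p.1 p.2] a b = w a b.
      move=> a b; rewrite vert_set; apply/idP/idP => [/and3P[] //|h].
      by rewrite h; have := ud_bnd Uw h => -[-> ->].
    rewrite inE; apply/andP; split.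
      by apply/udP; apply: UDP_ext Uw => a b; rewrite ew.
    apply/forallP => r; apply/implyP => rk.
    rewrite ew (_ : m - 2 - r = m.-2 - r); last by lia.
    exact: Hnd.
  + apply: set_ext => i j.
    have ew : forall a b, vert [set p : 'I_m * 'I_m | w p.1 p.2] a b = w a b.
      move=> a b; rewrite vert_set; apply/idP/idP => [/and3P[] //|h].
      by rewrite h; have := ud_bnd Uw h => -[-> ->].
    rewrite /Psi vert_set /c1.
    have -> : psiP k (m.-1 - k) (vert [set p : 'I_m * 'I_m | w p.1 p.2]) i j
              = psiP k (m.-1 - k) w i j by rewrite /psiP !ew.
    rewrite -Hv.
    case: (boolP (vert T i j)) => [vij|_]; last by rewrite !andbF.
    by have := ud_bnd U vij => -[-> ->].
- case=> T' /[!inE] /andP[/udP U /forallP Hn] ->.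
  have Hnd : forall r, r.+1 < k -> ~~ vert T' r (m.-2 - r).
    move=> r rk; case: (boolP (r < m)) => rm.
      by have := Hn (Ordinal rm); rewrite /= rk (_ : m - 2 - r = m.-2 - r) //; lia.
    by apply/negP => /vert_bnd []; rewrite (negbTE rm).
  have [Uv vZ Hn'] := up_dir km U Hnd.
  have ev : forall i j, vert (Psi T') i j = psiP k c1 (vert T') i j.
    move=> i j; rewrite vert_set; apply/idP/idP => [/and3P[] //|h].
    by rewrite h; have := ud_bnd Uv h => -[-> ->].
  apply/and3P; split.
  + by apply/udP; apply: UDP_ext Uv => i j; rewrite ev.
  + apply/forallP => r; apply/implyP => rk.
    by rewrite ev (_ : m.+1 - 2 - r = m.-1 - r); [apply: Hn' | lia].
  + by rewrite ev (_ : m.+1 - 2 - k = m.-1 - k) //; lia.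
Qed.
End Bij.

Lemma fE m j : j < m.-1 -> f m (Posz j) =
  #|[set T : {set 'I_m * 'I_m} |
      [&& upper_diag T, [forall r : 'I_m, (r < j) ==> ~~ vert T r (m - 2 - r)]
        & vert T j (m - 2 - j)]]|.
Proof. by move=> h; rewrite /f h. Qed.

Lemma G_split m j : j.+1 < m -> G m j.+1 = f m j + G m j.+2.
Proof.
move=> jm.
have jm' : j < m.-1 by lia.
rewrite fE // /G -(cardsID [set T : {set 'I_m * 'I_m} | vert T j (m - 2 - j)]).
congr (_ + _); apply: eq_card => T; rewrite !inE.
- rewrite andbA; congr (_ && _ && _); apply: eq_forallb => r; by rewrite ltnS.
- apply/idP/idP.
  + case/and3P => nV UD /forallP F; rewrite UD /=; apply/forallP => r; apply/implyP => rj.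
    case: (ltngtP r j) => h.
    * by have := F r; rewrite ltnS h.
    * by move: rj; lia.
    * by rewrite h.
  + case/andP => UD /forallP F; apply/andP; split; last (apply/andP; split => //).
    * have jm2 : j < m by lia.
      by have := F (Ordinal jm2); rewrite /= ltnSn.
    * apply/forallP => r; apply/implyP => rj; have := F r; rewrite ltnS (ltnW rj) //.
Qed.

Lemma G01 m : G m 1 = G m 0.
Proof.
by rewrite /G; apply: eq_card => T; rewrite !inE; congr (_ && _).
Qed.

Unset Implicit Arguments.
Import GRing.Theory.
Local Open Scope ring_scope.

Theorem lemma4p8 (n k : nat) :
  (3 <= n)%N -> (0 < k)%N -> (k < n.-1)%N ->
  (f n k%:Z)%:Z = (f n (k%:Z - 1))%:Z - (f n.-1 (k%:Z - 2))%:Z.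
Proof.
case: n => [//|m] n3 k0 km; rewrite /= in km.
have fk : forall j, (j < m)%N -> f m.+1 (Posz j) = G m j.
  by move=> j jm; rewrite fE // card_bij.
case: k k0 km => [//|k'] _ km.
have e1 : (Posz k'.+1 - 1 = Posz k') by rewrite -[k'.+1]addn1 PoszD addrK.
have km' : (k' < m)%N by apply: ltnW.
rewrite e1 !fk //.
case: k' km km' e1 => [|k''] km _ _.
- have -> : (Posz 1 - 2 = Negz 0) by [].
  by rewrite /= G01 subr0.
- have e2 : (Posz k''.+2 - 2 = Posz k'') by rewrite -[k''.+2]addn2 PoszD addrK.
  have km2 : (k''.+1 < m)%N by apply: ltnW.
  rewrite e2 /= (@G_split m k'') // PoszD.
  by rewrite addrAC subrr add0r.
Qed.
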